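(* Let $\mathcal{G}$ be a class of graphs with bounded expansion, and let $s\in\mathbb{N}$. Then there exists an integer $d=d(\mathcal{G},s)$ such that every $K_{2,s}$-free graph $G\in\mathcal{G}$ is strongly $d$-degenerate and hence satisfies $\mathrm{HG}(G)\le(2d)^d$.
   Context: A graph $H$ is a shallow minor of $G$ at depth $r$ (integer $r\ge0$) if there are disjoint sets $V_1,\dots,V_p\subseteq V(G)$ such that each $G[V_i]$ contains a vertex $x_i$ with every vertex of $V_i$ at distance at most $r$ from $x_i$ in $G[V_i]$, and $H$ is (isomorphic to) a subgraph of the graph obtained by contracting each $V_i$ to a single vertex (two contracted vertices adjacent iff some edge joins the corresponding sets). $\nabla_r(G)$ is the maximum of $e(H)/v(H)$ over all non-empty shallow minors $H$ of $G$ at depth $r$. A class $\mathcal{G}$ has bounded expansion if for every integer $r\ge0$ there is a constant $C_r$ with $\nabla_r(G)\le C_r$ for all $G\in\mathcal{G}$. A graph is $K_{2,s}$-free if it has no subgraph isomorphic to $K_{2,s}$. For an integer $d\ge1$, a vertex $v$ of $G$ is $d$-removable in $G$ if $d_G(v)\le d$ and at most one neighbour $w$ of $v$ has $d_G(w)>d$; $G$ is strongly $d$-degenerate if every non-empty subgraph $G'$ of $G$ contains a vertex $d$-removable in $G'$. Hat guessing number $\mathrm{HG}(G)$: the largest $q$ such that there are functions $f_v\colon[q]^{N_G(v)}\to[q]$ ($v\in V(G)$) with the property that for every colouring $c\colon V(G)\to[q]$ some $v$ has $f_v((c(w))_{w\in N_G(v)})=c(v)$. *)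

(* Defs.v *)
From mathcomp Require Import all_boot all_order all_algebra.
Set Implicit Arguments. Unset Strict Implicit. Unset Printing Implicit Defensive.
Import Order.TTheory GRing.Theory Num.Theory.

Record sgraph := SGraph {
  vert :> finType;
  adj : rel vert;
  adj_sym : symmetric adj;
  adj_irr : irreflexive adj }.

Definition edges (G : sgraph) : {set {set G}} :=
  [set A : {set G} | [exists u : G, exists v : G, (A == [set u; v]) && adj u v]].

Definition radius_le (G : sgraph) (V : {set G}) (x : G) (r : nat) : Prop :=
  x \in V /\ forall v, v \in V ->
    exists s : seq G, [/\ path (@adj G) x s, last x s = v,
                         all (fun y => y \in V) s & size s <= r].

(* A depth-r minor model: disjoint branch sets V_i (i < p) with centres x_i. *)
Definition shallow_model (G : sgraph) (r p : nat)
    (Vs : 'I_p -> {set G}) (xs : 'I_p -> G) : Prop :=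
  (forall i j, i != j -> [disjoint Vs i & Vs j]) /\
  (forall i, radius_le (Vs i) (xs i) r).

Definition contr_adj (G : sgraph) (p : nat) (Vs : 'I_p -> {set G}) (i j : 'I_p) : bool :=
  (i != j) && [exists x in Vs i, exists y in Vs j, adj x y].

(* nabla_r(G) <= C: every non-empty subgraph H = (S, F) of a depth-r contraction
   satisfies e(H) <= C * v(H). *)
Definition nabla_le (G : sgraph) (r : nat) (C : rat) : Prop :=
  forall (p : nat) (Vs : 'I_p -> {set G}) (xs : 'I_p -> G),
    shallow_model r Vs xs ->
    forall (S : {set 'I_p}) (F : {set {set 'I_p}}),
      S != set0 ->
      (forall A, A \in F -> exists i j,
          [/\ A = [set i; j], i \in S, j \in S & contr_adj Vs i j]) ->
      (#|F|%:Q <= C * #|S|%:Q)%R.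

Definition bounded_expansion (GC : sgraph -> Prop) : Prop :=
  forall r : nat, exists C : rat, forall G : sgraph, GC G -> nabla_le G r C.

Definition K2s_free (G : sgraph) (s : nat) : Prop :=
  ~ exists (a b : G) (f : 'I_s -> G),
      [/\ a != b, injective f &
          forall i, [/\ f i != a, f i != b, adj a (f i) & adj b (f i)]].

Definition sdeg (G : sgraph) (F : {set {set G}}) (v : G) : nat :=
  #|[set w : G | [set v; w] \in F]|.

Definition d_removable (G : sgraph) (d : nat) (S : {set G}) (F : {set {set G}}) (v : G) : bool :=
  [&& v \in S, sdeg F v <= d &
      #|[set w : G | ([set v; w] \in F) && (d < sdeg F w)]| <= 1].

Definition is_subgraph (G : sgraph) (S : {set G}) (F : {set {set G}}) : Prop :=
  F \subset edges G /\ forall A, A \in F -> A \subset S.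

Definition strongly_degenerate (d : nat) (G : sgraph) : Prop :=
  forall (S : {set G}) (F : {set {set G}}),
    is_subgraph S F -> S != set0 -> exists v, d_removable d S F v.

Definition nbhd_type (G : sgraph) (v : G) := {w : G | adj v w}.

Definition hat_winning (G : sgraph) (q : nat) : Prop :=
  exists f : forall v : G, {ffun nbhd_type v -> 'I_q} -> 'I_q,
    forall c : {ffun G -> 'I_q},
      exists v : G, f v [ffun w : nbhd_type v => c (val w)] = c v.

Definition HG_le (G : sgraph) (N : nat) : Prop :=
  forall q, hat_winning G q -> q <= N.

(* Main.v *)
Require Import Defs.
From mathcomp Require Import all_boot all_order all_algebra.
From mathcomp Require Import zify ring lra.
Set Implicit Arguments. Unset Strict Implicit. Unset Printing Implicit Defensive.
Import Order.TTheory GRing.Theory Num.Theory.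
Definition degS (G : sgraph) (S : {set G}) (v : G) : nat := #|[set u in S | adj v u]|.

Definition upd (G : sgraph) (q : nat) (c : {ffun G -> 'I_q}) (v : G) (x : 'I_q) :
  {ffun G -> 'I_q} := [ffun u => if u == v then x else c u].

Lemma edges_set2 (G : sgraph) (v w : G) : ([set v; w] \in edges G) = adj v w.
Proof.
apply/idP/idP => [|H]; last first.
  by rewrite inE; apply/existsP; exists v; apply/existsP; exists w; rewrite eqxx H.
rewrite inE => /existsP [u /existsP [u' /andP [/eqP E H]]].
have uu' : u != u' by apply: contraTneq H => ->; rewrite adj_irr.
have : u \in [set v; w] by rewrite E !inE eqxx.
have : u' \in [set v; w] by rewrite E !inE eqxx orbT.
rewrite !inE => /orP [] /eqP Hu' /orP [] /eqP Hu; subst.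
- by rewrite eqxx in uu'.
- by rewrite adj_sym.
- by [].
- by rewrite eqxx in uu'.
Qed.

Lemma card_bigcup_le (T I : finType) (P : pred I) (A : I -> {set T}) :
  #|\bigcup_(i | P i) A i| <= \sum_(i | P i) #|A i|.
Proof.
elim/big_rec2: _ => [|i U n _ H]; first by rewrite cards0. apply: leq_trans (leq_card_setU _ _).1 _.
by rewrite leq_add2l.
Qed.

Lemma card_sumb (T : finType) (P : pred T) : #|[set x | P x]| = \sum_x P x.
Proof.
rewrite -sum1dep_card big_mkcond /=; apply: eq_bigr => x _.
by case: (P x).
Qed.

Lemma exists_notin q (B : {set 'I_q}) : #|B| < q -> exists x, x \notin B.
Proof.
move=> H; have : 0 < #|~: B|.
  have := cardsC B; rewrite card_ord => E; lia.
by case/card_gt0P => x; rewrite inE => ?; exists x.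
Qed.

Definition gU q t (h : {ffun 'I_q -> {set 'I_q}}) : {set 'I_q} :=
  [set col | t < #|[set x | col \in h x]|].

Definition gW (G : sgraph) q t (U : {set G}) (gv : {ffun G -> 'I_q} -> {set 'I_q})
  (w : G) (h : {ffun 'I_q -> {set 'I_q}}) : {set 'I_q} :=
  [set col | [exists tau : {ffun G -> 'I_q}, exists X : {ffun G -> {set 'I_q}},
     [forall u0 in U, #|X u0| <= t] &&
     [forall x, ((x \notin gv (upd tau w col)) && [forall u0 in U, x \notin X u0])
                 ==> (col \in h x)]]].

Lemma gU_card q t m (h : {ffun 'I_q -> {set 'I_q}}) :
  (forall x, #|h x| <= m) -> #|gU t h| * t.+1 <= q * m.
Proof.
move=> Hm.
rewrite -sum_nat_const.
apply: (@leq_trans (\sum_(col in gU t h) #|[set x | col \in h x]|)).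
  by apply: leq_sum => col; rewrite inE.
apply: (@leq_trans (\sum_col #|[set x | col \in h x]|)).
  rewrite [X in _ <= X](bigID (fun col => col \in gU t h)) /=; exact: leq_addr.
under eq_bigr => col _ do rewrite card_sumb.
rewrite exchange_big /=.
apply: (@leq_trans (\sum_(x : 'I_q) m)); last by rewrite sum_nat_const card_ord.
apply: leq_sum => x _.
have -> : \sum_(col : 'I_q) (col \in h x) = #|h x|.
  rewrite -card_sumb; apply: eq_card => col; by rewrite inE.
exact: Hm.
Qed.

Lemma gW_card (G : sgraph) q t (U : {set G}) (gv : {ffun G -> 'I_q} -> {set 'I_q}) (w : G) (h : {ffun 'I_q -> {set 'I_q}}) mv :
  (forall tau, #|gv tau| <= mv) -> 2 * (mv + #|U| * t) < q ->
  (forall x, #|h x| <= 1) -> #|gW t U gv w h| <= 1.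
Proof.
move=> Hv Hq Hh; apply/card_le1_eqP => c1 c2.
rewrite !inE => /existsP [tau1 /existsP [X1 /andP [/forallP HX1 /forallP H1]]].
move=> /existsP [tau2 /existsP [X2 /andP [/forallP HX2 /forallP H2]]].
pose Bad := gv (upd tau1 w c1) :|: gv (upd tau2 w c2) :|:
            \bigcup_(u0 | u0 \in U) (X1 u0 :|: X2 u0).
have cB : #|Bad| < q.
  apply: leq_ltn_trans Hq.
  apply: leq_trans (leq_card_setU _ _).1 _.
  have e1 := (leq_card_setU (gv (upd tau1 w c1)) (gv (upd tau2 w c2))).1.
  have e2 := card_bigcup_le (fun u0 => u0 \in U) (fun u0 => X1 u0 :|: X2 u0).
  have e3 : \sum_(u0 | u0 \in U) #|X1 u0 :|: X2 u0| <= #|U| * (t + t).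
    rewrite -sum_nat_const; apply: leq_sum => u0 u0U.
    apply: leq_trans (leq_card_setU _ _).1 _.
    by apply: leq_add; [move: (HX1 u0) | move: (HX2 u0)]; rewrite u0U.
  have := Hv (upd tau1 w c1); have := Hv (upd tau2 w c2).
  lia.
have [x xB] := exists_notin cB.
move: xB; rewrite !inE !negb_or => /andP [/andP [x1 x2] xU].
have xU' : forall u0, u0 \in U -> (x \notin X1 u0) && (x \notin X2 u0).
  move=> u0 u0U; rewrite -negb_or; apply: contra xU => Hx; apply/bigcupP; exists u0 => //.
  by rewrite inE.
have hc1 : c1 \in h x.
  move: (H1 x); rewrite x1 /= => /implyP; apply; apply/forallP => u0.
  by apply/implyP => /xU' /andP [].
have hc2 : c2 \in h x.
  move: (H2 x); rewrite x2 /= => /implyP; apply; apply/forallP => u0.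
  by apply/implyP => /xU' /andP [].
by move/card_le1_eqP: (Hh x) => E; apply: E.
Qed.

Lemma degS_D1 (G : sgraph) (S : {set G}) (v u : G) :
  degS (S :\ v) u = degS S u - (v \in S) && adj u v.
Proof.
rewrite /degS (cardsD1 v [set y in S | adj u y]).
have -> : [set y in S | adj u y] :\ v = [set y in S :\ v | adj u y].
  by apply/setP => y; rewrite !inE andbA.
by rewrite inE addKn.
Qed.

Lemma updE (G : sgraph) q (c : {ffun G -> 'I_q}) v x u :
  upd c v x u = if u == v then x else c u.
Proof. by rewrite ffunE. Qed.

Lemma sdeg_sub (G : sgraph) (S : {set G}) (y : G) :
  y \in S -> sdeg [set A in edges G | A \subset S] y = degS S y.
Proof.
move=> yS; rewrite /sdeg /degS; apply: eq_card => u.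
have E := edges_set2 y u; rewrite inE in E.
by rewrite !inE E subUset !sub1set yS andbC.
Qed.

Lemma main_game (G : sgraph) (d q : nat) : 0 < d -> 4 * (4 * d) ^ d < q ->
  strongly_degenerate d G ->
  forall n (S : {set G}), #|S| <= n ->
  forall g : G -> {ffun G -> 'I_q} -> {set 'I_q},
  (forall v, v \in S -> forall c c' : {ffun G -> 'I_q},
      (forall u, u \in S -> adj v u -> c u = c' u) -> g v c = g v c') ->
  (forall v c, v \in S -> #|g v c| <= (4 * d) ^ (d - degS S v)) ->
  exists c : {ffun G -> 'I_q}, forall v, v \in S -> c v \notin g v c.
Proof.
move=> d0 hq sd n.
have q0 : 0 < q by lia.
have F0 : 0 < 4 * d by lia.
elim: n => [|n IH] S hS g gloc gcnt;
  case: (set_0Vmem S) => [S0 | [v0 v0S]];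
  try (by exists [ffun=> Ordinal q0] => v; rewrite S0 inE).
  by move: hS; rewrite leqn0 cards_eq0 => /eqP S0; rewrite S0 inE in v0S.
pose FS := [set A in edges G | A \subset S].
have [v /and3P [vS degv Hheavy]] : exists v, d_removable d S FS v.
  apply: sd; last by apply/set0Pn; exists v0.
  split; first by apply/subsetP => A; rewrite inE => /andP [].
  by move=> A; rewrite inE => /andP [].
rewrite sdeg_sub // in degv.
have Hv : forall y, (y \in [set w | [set v; w] \in FS & d < sdeg FS w]) =
                    [&& y \in S, adj v y & d < degS S y].
  move=> y; rewrite in_set; have E := edges_set2 v y.
  have -> : ([set v; y] \in FS) = ([set v; y] \in edges G) && ([set v; y] \subset S).
    by rewrite /FS in_set.
  rewrite E subUset !sub1set vS /=.
  case yS: (y \in S) => /=; last by rewrite andbF.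
  by rewrite andbT sdeg_sub.
have [w [Hw1 Hw2]] : exists w, (w = v \/ [/\ w \in S, adj v w & d < degS S w]) /\
    (forall u, u \in S -> adj v u -> u != w -> degS S u <= d).
  case: (pickP [pred y | [&& y \in S, adj v y & d < degS S y]]) => [w /= Hw | Hn].
  - exists w; split; first by right; apply/and3P.
    move=> u uS vu uw; rewrite leqNgt; apply/negP => du.
    move/card_le1_eqP: Hheavy => /(_ u w).
    rewrite !Hv uS vu du Hw => /(_ isT isT) E.
    by rewrite E eqxx in uw.
  - exists v; split; first by left.
    move=> u uS vu _; move: (Hn u) => /=; rewrite uS vu /= => /negbT.
    by rewrite -leqNgt.
pose F := 4 * d. pose t := q %/ F.
pose U := [set u in S | adj v u && (u != w)].
pose S' := S :\ v.
pose hf := fun u (c : {ffun G -> 'I_q}) =>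
  [ffun x => g u (upd c v x)] : {ffun 'I_q -> {set 'I_q}}.
pose g' := fun u c => if u \in U then gU t (hf u c)
  else if (u == w) && (w != v) then gW t U (g v) w (hf u c) else g u c.
have US : U \subset S'.
  apply/subsetP => u; rewrite !inE => /andP [uS /andP [vu _]].
  rewrite uS andbT; apply: contraTneq vu => ->; by rewrite adj_irr.
have cardU : #|U| <= d.
  apply: leq_trans degv; apply: subset_leq_card; apply/subsetP => u.
  by rewrite !inE => /andP [-> /andP [-> _]].
have mvb : forall c, #|g v c| <= F ^ d.
  move=> c; apply: leq_trans (gcnt v c vS) _; apply: leq_pexp2l => //; lia.
have hqq : 2 * (F ^ d + #|U| * t) < q.
  have tF : t * F <= q := leq_divM q F.
  have Ut : #|U| * t <= d * t := leq_mul cardU (leqnn t).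
  rewrite /F in tF hq *; move: ((4 * d) ^ d) hq => P hq; lia.
have S'S : forall u, u \in S' -> (u \in S) && (u != v).
  by move=> u; rewrite !inE andbC.
have [c' Hc'] : exists c' : {ffun G -> 'I_q}, forall u, u \in S' -> c' u \notin g' u c'.
  apply: IH.
  - by move: hS; rewrite (cardsD1 v S) vS /= add1n ltnS.
  - move=> u /S'S /andP [uS uv] c1 c2 Hc.
    have Hhf : hf u c1 = hf u c2.
      apply/ffunP => x; rewrite !ffunE; apply: gloc => // y yS uy.
      rewrite !updE; case: (y =P v) => [//|/eqP yv].
      by apply: Hc => //; rewrite !inE yv yS.
    rewrite /g'; case: ifP => uU; first by rewrite Hhf.
    case: ifP => uw; first by rewrite Hhf.
    apply: gloc => // y yS uy; apply: Hc => //.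
    rewrite !inE yS andbT; apply/eqP => yv; subst y.
    move: uU; rewrite inE uS adj_sym uy /= => /negbT; rewrite negbK => /eqP uw'.
    by move: uw; rewrite uw' eqxx /= => /negbT; rewrite negbK => /eqP wv; rewrite uw' wv eqxx in uv.
  - move=> u c /S'S /andP [uS uv].
    rewrite degS_D1 vS /= /g'; case: ifP => uU.
    + move: (uU); rewrite inE uS /= => /andP [vu uw].
      have dgu := Hw2 u uS vu uw.
      have dg1 : 0 < degS S u by apply/card_gt0P; exists v; rewrite inE vS adj_sym.
      rewrite adj_sym vu.
      have -> : d - (degS S u - true) = (d - degS S u).+1 by rewrite /=; lia.
      have H := gU_card t (m := F ^ (d - degS S u)) (h := hf u c)
                  (fun x => ltac:(rewrite ffunE; exact: gcnt)).
      have qF : q <= t.+1 * F := ltnW (ltn_ceil q F0).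
      rewrite expnS; rewrite -(leq_pmul2r (ltn0Sn t)).
      apply: leq_trans H _.
      have := leq_mul qF (leqnn (F ^ (d - degS S u))).
      move: (F ^ (d - degS S u)) => P; rewrite /F; lia.
    + case: ifP => uw.
      * move/andP: uw => [/eqP uw wv].
        apply: (@leq_trans 1); last by rewrite expn_gt0 F0.
        apply: (@gW_card _ _ _ _ _ _ _ (F ^ d)) => // x.
        rewrite ffunE; apply: leq_trans (gcnt u _ uS) _.
        case: Hw1 => [wv'|[_ _ dw]]; first by rewrite wv' eqxx in wv.
        by rewrite uw; have -> : d - degS S w = 0 by lia.
      * have vu : adj u v = false.
          apply/negP => uvadj; move: uU; rewrite inE uS adj_sym uvadj /= => /negbT.
          rewrite negbK => /eqP uw'; move: uw; rewrite uw' eqxx /= => /negbT.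
          by rewrite negbK => /eqP wv; rewrite uw' wv eqxx in uv.
        by rewrite vu subn0; apply: gcnt.
pose X : {ffun G -> {set 'I_q}} := [ffun u => [set x | c' u \in g u (upd c' v x)]].
have HX : forall u0, u0 \in U -> #|X u0| <= t.
  move=> u0 u0U; have u0S' : u0 \in S' := subsetP US _ u0U.
  have := Hc' u0 u0S'; rewrite /g' u0U inE -leqNgt ffunE.
  have -> : [set x | c' u0 \in hf u0 c' x] = [set x | c' u0 \in g u0 (upd c' v x)].
    by apply/setP => x; rewrite !inE ffunE.
  by [].
have [x [xv xU xw]] : exists x, [/\ x \notin g v c',
    forall u0, u0 \in U -> x \notin X u0 & w != v -> c' w \notin g w (upd c' v x)].
  case: (boolP (w != v)) => wv.
  - have [wS vw dw] : [/\ w \in S, adj v w & d < degS S w].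
      by case: Hw1 => [/eqP|//]; rewrite (negbTE wv).
    have wS' : w \in S' by rewrite !inE wv wS.
    have wU : w \notin U by rewrite inE eqxx !andbF.
    have := Hc' w wS'; rewrite /g' (negbTE wU) eqxx wv /= inE negb_exists.
    move=> /forallP /(_ c'); rewrite negb_exists => /forallP /(_ X).
    rewrite negb_and => /orP [H|H].
    + have : [forall u0 in U, #|X u0| <= t].
        by apply/forallP => u0; apply/implyP; exact: HX.
      by rewrite (negbTE H).
    + move/forallPn: H => [x]; rewrite negb_imply => /andP [/andP [H1 /forallP H2] H3].
      exists x; split.
      * have E : upd c' w (c' w) = c'.
          by apply/ffunP => y; rewrite ffunE; case: eqP => // ->.
        by rewrite E in H1.
      * by move=> u0 u0U; move: (H2 u0); rewrite u0U.
      * by move=> _; rewrite ffunE in H3.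
  - pose Bad := g v c' :|: \bigcup_(u0 | u0 \in U) X u0.
    have cB : #|Bad| < q.
      apply: leq_ltn_trans hqq.
      apply: leq_trans (leq_card_setU _ _).1 _.
      have e2 := card_bigcup_le (fun u0 => u0 \in U) X.
      have e3 : \sum_(u0 | u0 \in U) #|X u0| <= #|U| * t.
        by rewrite -sum_nat_const; apply: leq_sum => u0 u0U; apply: HX.
      have := mvb c'; lia.
    have [x xB] := exists_notin cB.
    move: xB; rewrite !inE negb_or => /andP [x1 xU].
    exists x; split; [by [] | | by []].

    move=> u0 u0U; apply: contra xU => Hx; apply/bigcupP; by exists u0.
exists (upd c' v x) => y yS; rewrite updE.
case: (boolP (y == v)) => [/eqP -> | yv].
  rewrite ?eqxx; have -> : g v (upd c' v x) = g v c'; last by [].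
  apply: gloc => // u uS vu; rewrite updE; case: eqP => // uv; subst u.
  by rewrite adj_irr in vu.
rewrite ?(negbTE yv).
have yS' : y \in S' by rewrite !inE yv.
case: (boolP (y \in U)) => yU.
  by have := xU y yU; rewrite ffunE inE.
case: (boolP ((y == w) && (w != v))) => [/andP [/eqP -> wv] | ywv].
  exact: xw.
have := Hc' y yS'; rewrite /g' (negbTE yU) (negbTE ywv).
have -> : g y (upd c' v x) = g y c'; last by [].
apply: gloc => // u uS yu; rewrite updE; case: eqP => // uv; subst u.
exfalso; move: yU; rewrite inE yS adj_sym yu /= negbK => /eqP yw.
by move: ywv; rewrite yw eqxx /= negbK => /eqP wv; rewrite yw wv eqxx in yv.
Qed.

Lemma HG_strong (G : sgraph) d : 0 < d -> strongly_degenerate d G ->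
  HG_le G (4 * (4 * d) ^ d).
Proof.
move=> d0 sd q [f Hf]; rewrite leqNgt; apply/negP => hq.
pose g := fun (v : G) (c : {ffun G -> 'I_q}) =>
  [set f v [ffun w : nbhd_type v => c (val w)]].
have [c Hc] := @main_game G d q d0 hq sd #|[set: G]| [set: G] (leqnn _) g
  (fun v _ c c' H => ltac:(rewrite /g; congr [set f v _]; apply/ffunP => w;
       rewrite !ffunE; apply: H; [by rewrite inE | exact: (valP w)]))
  (fun v c _ => ltac:(by rewrite /g cards1 expn_gt0; apply/orP; left; lia)).
have [v Hv] := Hf c.
by move: (Hc v (in_setT v)); rewrite /g in_set1 Hv eqxx.
Qed.

Lemma nabla_T (G : sgraph) r C (T : finType) (S : {set T}) (Vs : T -> {set G})
  (xs : T -> G) (F : {set {set T}}) :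
  nabla_le G r C ->
  (forall i j, i \in S -> j \in S -> i != j -> [disjoint Vs i & Vs j]) ->
  (forall i, i \in S -> radius_le (Vs i) (xs i) r) ->
  S != set0 ->
  (forall A, A \in F -> exists i j, [/\ A = [set i; j], i \in S, j \in S, i != j &
       [exists x in Vs i, exists y in Vs j, adj x y]]) ->
  (#|F|%:Q <= C * #|S|%:Q)%R.
Proof.
move=> nab disj rad S0 HF.
have [i0 i0S] := set0Pn _ S0.
pose p := #|S|.
pose ev := fun k : 'I_p => enum_val (A := mem S) k.
have evS : forall k, ev k \in S by move=> k; exact: enum_valP.
have ev_inj : injective ev by move=> k l; exact: enum_val_inj.
pose er : T -> 'I_p := fun x => enum_rank_in i0S x.
have erK : {in S, cancel er ev} by exact: enum_rankK_in.
pose F' := [set [set k | ev k \in A] | A : {set T} in F].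
have FsubS : forall A, A \in F -> A \subset S.
  move=> A /HF [i [j [-> iS jS _ _]]].
  by rewrite subUset !sub1set iS jS.
have cF : #|F'| = #|F|.
  apply: card_in_imset => A B AF BF E; apply/setP => x.
  case: (boolP (x \in S)) => xS.
    have := congr1 (fun Y : {set 'I_p} => er x \in Y) E; by rewrite /= !inE !erK.
  have xA : x \notin A by apply: contra xS; apply: (subsetP (FsubS _ AF)).
  have xB : x \notin B by apply: contra xS; apply: (subsetP (FsubS _ BF)).
  by rewrite (negbTE xA) (negbTE xB).
have := nab p (fun k => Vs (ev k)) (fun k => xs (ev k)) _ [set: 'I_p] F' _ _.
rewrite cF cardsT card_ord; apply.
- split.
  + move=> k l kl; apply: disj => //; apply: contra kl => /eqP E.
    by rewrite (ev_inj _ _ E).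
  + by move=> k; apply: rad.
- by apply/set0Pn; exists (er i0); rewrite inE.
- move=> A' /imsetP [A AF ->].
  have [i [j [Aij iS jS ij Hx]]] := HF A AF.
  exists (er i), (er j); split; rewrite ?inE //.
  + apply/setP => k; rewrite !inE Aij !inE.
    by rewrite -[k == er i](inj_eq ev_inj) -[k == er j](inj_eq ev_inj) !erK.
  + rewrite /contr_adj !erK // Hx andbT.
    by apply: contra ij => /eqP E; rewrite -(erK i iS) -(erK j jS) E.
Qed.


Lemma part1 (G : sgraph) (s d : nat) (C : rat) :
  nabla_le G 1 C -> K2s_free G s ->
  (2%:R * C * (1 + s%:R * C) <= d%:R)%R -> strongly_degenerate d G.
Proof.
move=> nab K2 hd S F [FE FS] S0.
case: (boolP [exists v, d_removable d S F v]) => [/existsP //|/existsPn nrem].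
exfalso.
have adjF : forall v w, [set v; w] \in F -> adj v w.
  by move=> v w H; rewrite -edges_set2; exact: (subsetP FE).
have inS : forall v w, [set v; w] \in F -> (v \in S) && (w \in S).
  by move=> v w /FS; rewrite subUset !sub1set.
pose B := [set v in S | d < sdeg F v].
pose L := S :\: B.
pose Nb := fun v => [set w | ([set v; w] \in F) && (d < sdeg F w)].
have NbB : forall v w, w \in Nb v -> w \in B.
  by move=> v w; rewrite !inE => /andP [/inS /andP [_ ->] ->].
have LB : forall v, v \in L -> v \notin B by move=> v; rewrite inE => /andP [].
have Nb2 : forall v, v \in L -> 1 < #|Nb v|.
  move=> v vL; have := nrem v; move: vL; rewrite !inE => /andP [vB vS].
  rewrite /d_removable vS /= negb_and -ltnNge -ltnNge => /orP [dv|//].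
  by rewrite vS dv in vB.
pose b1 := fun v => nth v (enum (Nb v)) 0.
pose b2 := fun v => nth v (enum (Nb v)) 1.
have hb : forall v, v \in L -> [/\ b1 v \in Nb v, b2 v \in Nb v & b1 v != b2 v].
  move=> v vL; have := Nb2 v vL; rewrite cardE => h.
  split; first by rewrite -mem_enum; apply: mem_nth; exact: ltnW h.
    by rewrite -mem_enum; apply: mem_nth.
  by rewrite /b1 /b2 nth_uniq ?enum_uniq //; exact: ltnW h.
have [v0 v0S] := set0Pn _ S0.
have B0 : B != set0.
  case: (boolP (v0 \in B)) => [vB|vB]; first by apply/set0Pn; exists v0.
  have v0L : v0 \in L by rewrite inE vB v0S.
  have [h1 _ _] := hb v0 v0L; apply/set0Pn; exists (b1 v0); exact: NbB h1.
have ha : (d.+1 * #|B| <= 2 * #|F|)%N.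
  have e1 : forall b, sdeg F b <= #|[set A in F | b \in A]|.
    move=> b; rewrite /sdeg.
    rewrite -(@card_in_imset _ _ (fun w => [set b; w]) [set w | [set b; w] \in F]).
    - apply: subset_leq_card; apply/subsetP => A /imsetP [w wF ->].
      by rewrite !inE in wF *; rewrite wF eqxx.
    - move=> w w'; rewrite !inE => /adjF bw /adjF bw' E.
      have : w \in [set b; w'] by rewrite -E set22.
      rewrite !inE => /orP [/eqP wb|/eqP //]; subst w; by rewrite adj_irr in bw.
  have e2 : \sum_(b in B) #|[set A in F | b \in A]| <= 2 * #|F|.
    under eq_bigr => b _ do rewrite (card_sumb (fun A : {set G} => (A \in F) && (b \in A))).
    rewrite exchange_big /=.
    apply: (@leq_trans (\sum_(A : {set G}) ((A \in F) * 2))).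
      apply: leq_sum => A _; case AF: (A \in F) => /=; last by rewrite big1.
      apply: (@leq_trans #|A|).
        have -> : #|A| = \sum_b (b \in A).
          by rewrite -card_sumb; apply: eq_card => x; rewrite inE.
        rewrite [X in _ <= X](bigID (fun b => b \in B)) /=.
        exact: leq_addr.
      have := subsetP FE A AF; rewrite inE => /existsP [u /existsP [u' /andP [/eqP -> _]]].
      by rewrite cards2; case: (u != u').
    have -> : \sum_(A : {set G}) ((A \in F) * 2) = \sum_(A in F) 2.
      by rewrite [RHS]big_mkcond; apply: eq_bigr => A _; case: (A \in F).
    by rewrite sum_nat_const mulnC.
  apply: leq_trans e2; rewrite mulnC -sum_nat_const; apply: leq_sum => b.
  by rewrite inE => /andP [_ db]; apply: leq_trans (e1 b).
have hbb : (#|F|%:R <= C * #|S|%:R :> rat)%R.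
  apply: (@nabla_T G 1 C G S (fun v => [set v]) id F nab) => //.
  - by move=> i j _ _ ij; rewrite disjoints1 inE.
  - move=> i _; split; first by rewrite inE.
    by move=> v; rewrite inE => /eqP ->; exists [::].
  - move=> A AF; have := subsetP FE A AF.
    rewrite inE => /existsP [u /existsP [u' /andP [/eqP E uu']]].
    have := FS A AF; rewrite E subUset !sub1set => /andP [uS u'S].
    exists u, u'; split => //.
    + by apply: contraTneq uu' => ->; rewrite adj_irr.
    + apply/existsP; exists u; rewrite inE eqxx /=; apply/existsP; exists u'.
      by rewrite inE eqxx.
pose g := fun v => [set b1 v; b2 v].
pose M := [set g v | v in L].
have fibP : forall u a, u \in L -> a \in g u -> [/\ a \in B, adj a u & u != a].
  move=> u a uL; have [h1 h2 _] := hb u uL.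
  have key : a \in Nb u -> [/\ a \in B, adj a u & u != a].
    move=> aN; have aB := NbB _ _ aN.
    split => //.
      by move: aN; rewrite inE => /andP [/adjF]; rewrite adj_sym.
    by apply: contraNneq (LB u uL) => ->.
  move=> ag; apply: key; move: ag; rewrite !inE => /orP [] /eqP ->;
    [move: h1 | move: h2]; rewrite inE; exact: id.
have hfib : forall A, A \in M -> (#|[set v in L | g v == A]| <= s)%N.
  move=> A /imsetP [w wL ->]; rewrite leqNgt; apply/negP => hs.
  pose Fib := [set v in L | g v == g w].
  pose ef : 'I_#|Fib| -> G := fun k => enum_val k.
  have efP : forall k, ef k \in Fib by move=> k; exact: enum_valP.
  have [hw1 hw2 h12] := hb w wL.
  apply: K2; exists (b1 w), (b2 w), (fun i : 'I_s => ef (widen_ord (ltnW hs) i)).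
  split => //.
    move=> i j /enum_val_inj E; apply: val_inj.
    by have := congr1 val E.
  move=> i; have := efP (widen_ord (ltnW hs) i).
  set z := ef _; rewrite inE => /andP [uL /eqP gu].
  have [a1B a1u ua1] := fibP z (b1 w) uL (ltac:(by rewrite gu !inE eqxx)).
  have [a2B a2u ua2] := fibP z (b2 w) uL (ltac:(by rewrite gu !inE eqxx orbT)).
  by split.
have hc : (#|L| <= s * #|M|)%N.
  rewrite -sum1_card (partition_big g (mem M)) /=; last first.
    by move=> v vL; apply: imset_f.
  apply: (@leq_trans (\sum_(A in M) s)); last by rewrite sum_nat_const mulnC.
  apply: leq_sum => A AM; rewrite sum1dep_card; exact: hfib.
pose rep := fun A => odflt v0 [pick v in L | g v == A].
have repP : forall A, A \in M -> rep A \in L /\ g (rep A) = A.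
  move=> A /imsetP [v vL ->]; rewrite /rep; case: pickP => [u /andP [uL /eqP] //|].
  by move/(_ v); rewrite vL eqxx.
pose R := [set rep A | A in M].
have RL : forall x, x \in R -> x \in L.
  by move=> x /imsetP [A AM ->]; case: (repP A AM).
pose Vs := fun b => b |: [set v in R | b1 v == b].
have hd' : (#|M|%:R <= C * #|B|%:R :> rat)%R.
  apply: (@nabla_T G 1 C G B Vs id M nab) => //.
  - move=> i j iB jB ij; rewrite -setI_eq0; apply/eqP/setP => x.
    rewrite !inE; apply/negP => /andP [].
    move=> /orP [/eqP xi|/andP [xR /eqP xi]] /orP [/eqP xj|/andP [xR' /eqP xj]].
    + by rewrite -xi -xj eqxx in ij.
    + by move: (LB _ (RL _ xR')); rewrite xi iB.
    + by move: (LB _ (RL _ xR)); rewrite xj jB.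
    + by rewrite -xi -xj eqxx in ij.
  - move=> b bB; split; first by rewrite !inE eqxx.
    move=> v; rewrite !inE => /orP [/eqP ->|/andP [vR /eqP vb]]; first by exists [::].
    exists [:: v]; split => //=.
      have [h1 _ _] := hb v (RL _ vR).
      move: h1; rewrite inE vb => /andP [/adjF]; rewrite adj_sym => -> _ //.
    by rewrite !inE vR vb eqxx orbT.
  - move=> A AM; have [vL gv] := repP A AM; set v := rep A in vL gv.
    have [h1 h2 h12] := hb v vL.
    exists (b1 v), (b2 v); split => //.
    + exact: NbB h1.
    + exact: NbB h2.
    + apply/existsP; exists v; rewrite !inE.
      have vR : v \in R by apply: imset_f.
      rewrite vR eqxx orbT /=; apply/existsP; exists (b2 v); rewrite !inE eqxx /=.
      by move: h2; rewrite inE => /andP [/adjF].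
have cS : #|S| = (#|B| + #|L|)%N.
  rewrite -(cardsID B S); congr (_ + _); apply: eq_card => x.
  by rewrite !inE; case: (x \in S); rewrite ?andbF //= andbT.
move: ha hc; rewrite -!(ler_nat rat) !natrM => ha hc.
rewrite cS natrD in hbb.
have hB : (1 <= #|B|%:R :> rat)%R by rewrite ler1n card_gt0.
move: hbb hd' ha hc hB hd.
move: (#|B|%:R : rat) (#|L|%:R : rat) (#|F|%:R : rat) (#|M|%:R : rat)
  (ler0n rat #|L|) (ler0n rat #|F|) (ler0n rat #|M|) (ler0n rat s).
move=> b l e m l0 e0 m0 s0 hbb hd' ha hc hB hd.
have hC : (0 <= C)%R by nra.
have h1 : (C * l <= C * (s%:R * m))%R by apply: ler_wpM2l.
have h2 : (s%:R * m <= s%:R * (C * b))%R by apply: ler_wpM2l.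
have h3 : (C * (s%:R * m) <= C * (s%:R * (C * b)))%R by apply: ler_wpM2l.
have h4 : (2%:R * C * (1 + s%:R * C) * b <= d%:R * b)%R by apply: ler_wpM2r; lra.
rewrite -natr1 in ha.
have H : (b <= 0 :> rat)%R by nra.
by move: (le_trans hB H); rewrite ler10.
Qed.

Unset Implicit Arguments.

Theorem corollary1p6 (GC : sgraph -> Prop) (s : nat) :
  bounded_expansion GC ->
  exists d : nat, 1 <= d /\
    forall G : sgraph, GC G -> K2s_free G s ->
      strongly_degenerate d G /\ HG_le G ((2 * d) ^ d).
Proof.
move=> BE; have [C HC] := BE 1.
pose X : rat := (2%:R * C * (1 + s%:R * C))%R.
pose D := (Num.Def.archi_bound `|X|%R).+1.
have XD : forall d, (D <= d)%N -> (X <= d%:R)%R.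
  move=> d Dd; apply: le_trans (ler_norm X) _; apply: ltW.
  apply: lt_le_trans (archi_boundP (normr_ge0 X)) _.
  by rewrite ler_nat; apply: leq_trans Dd; rewrite /D.
have D1 : (0 < D)%N by [].
clearbody D.
exists (8 * D); split; first by lia.
move=> G GG K2; split.
  by apply: part1 (HC G GG) K2 (XD _ _); lia.
have sdD := part1 (HC G GG) K2 (XD D (leqnn D)).
have HH := HG_strong D1 sdD.
move=> q Hq; apply: leq_trans (HH q Hq) _.
have -> : 2 * (8 * D) = 16 * D by lia.
apply: (@leq_trans ((16 * D) ^ D.+1)); last by apply: leq_pexp2l; lia.
rewrite expnS; apply: leq_mul; first by lia.
by rewrite leq_exp2r //; lia.
Qed.
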